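(* Let $S>0$ and let $D=(D[1],\dots,D[n])$ be a vector of demands with $0<D[i]\le S$ for all $i$. Then there exists an integer $k$ with $1\le k\le a(n)$ such that the egalitarian connection-time of the electricity division instance $(S,D)$ equals $\frac{k}{OPT(D_k)}$. Moreover, this value is attained by taking an optimal $k$-times bin packing of $D$ (with $OPT(D_k)$ bins) and connecting the set of households in each bin during a fraction $\frac{1}{OPT(D_k)}$ of the time interval (the bins being connected during pairwise disjoint subintervals).
   Context: Electricity division: there is a supply $S>0$, $n$ households with demands $D[1],\dots,D[n]$, and a time interval $[0,T]$. A schedule is a partition of $[0,T]$ into finitely many subintervals $I_1,\dots,I_p$ together with sets $A_1,\dots,A_p\subseteq\{1,\dots,n\}$ such that $\sum_{i\in A_l}D[i]\le S$ for each $l$; household $i$ receives connection time $u_i=\sum_{l:\,i\in A_l}|I_l|$. The egalitarian connection-time is $\max_{\text{schedules}}\min_i u_i/T$ (the largest fraction of the time that every household can simultaneously be guaranteed). $k$-times bin packing: given a bin capacity $S$, items $1,\dots,n$ with sizes $D[i]$, and an integer $k\ge1$, $D_k$ denotes the collection of $k$ copies of each item; a $k$-times bin packing is an assignment of all copies in $D_k$ to bins such that the total size in each bin is at most $S$ and no bin contains two copies of the same item (so each item lies in exactly $k$ distinct bins). $OPT(D_k)$ is the minimum number of bins of a $k$-times bin packing. For a positive integer $n$, $a(n)$ denotes the maximum determinant of an $n\times n$ matrix all of whose entries are $0$ or $1$. *)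

(* Defs.v *)
From HB Require Import structures.
From mathcomp Require Import all_boot all_order all_algebra.
From mathcomp Require Import reals.
Set Implicit Arguments. Unset Strict Implicit. Unset Printing Implicit Defensive.
Import Order.TTheory GRing.Theory Num.Theory.
Local Open Scope ring_scope.

Section Defs.
Variables (R : realType) (n : nat) (S : R) (D : 'I_n -> R).

Definition feasible (A : {set 'I_n}) : bool := \sum_(i in A) D i <= S.

(* A schedule on [0,T]: a finite sequence of consecutive subintervals, given
   by their lengths, each with a feasible set of connected households. *)
Definition is_schedule (T : R) (s : seq (R * {set 'I_n})) : Prop :=
  (forall p, p \in s -> 0 <= p.1) /\
  (forall p, p \in s -> feasible p.2) /\
  \sum_(p <- s) p.1 = T.

Definition conn_time (s : seq (R * {set 'I_n})) (i : 'I_n) : R :=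
  \sum_(p <- s | i \in p.2) p.1.

(* v = max over schedules of min_i u_i / T *)
Definition egalitarian_value (T v : R) : Prop :=
  (exists s, is_schedule T s /\ forall i, v <= conn_time s i / T) /\
  (forall s, is_schedule T s -> exists i, conn_time s i / T <= v).

(* k-times bin packing: a sequence of bins (sets, so no two copies of an item
   share a bin), each of total size <= S, each item in exactly k bins *)
Definition is_kpacking (k : nat) (B : seq {set 'I_n}) : Prop :=
  (forall A, A \in B -> feasible A) /\
  (forall i : 'I_n, count (fun A : {set 'I_n} => i \in A) B = k).

Definition is_OPT (k m : nat) : Prop :=
  (exists B, is_kpacking k B /\ size B = m) /\
  (forall B, is_kpacking k B -> (m <= size B)%N).

Definition packing_schedule (T : R) (B : seq {set 'I_n}) : seq (R * {set 'I_n}) :=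
  [seq (T / (size B)%:R, A) | A <- B].
End Defs.

Definition maxdet01 (m : nat) : int :=
  \big[Order.max/0%R]_(M : 'M[bool]_m) \det (map_mx (fun b : bool => (b%:R : int)) M).

(* Main.v *)
Require Import Defs.
From HB Require Import structures.
From mathcomp Require Import all_boot all_order all_algebra.
From mathcomp Require Import reals.
From mathcomp Require Import ring lra zify.
From Stdlib Require Import Classical.
Import Order.TTheory GRing.Theory Num.Theory.
Local Open Scope ring_scope.
Set Implicit Arguments. Unset Strict Implicit. Unset Printing Implicit Defensive.


Definition b2z (b : bool) : int := b%:R.
Definition bdet m (M : 'M[bool]_m) : int := \det (map_mx b2z M).

Lemma le_bigmax_seq (T : eqType) (r : seq T) (F : T -> int) (idx : int) x :
  x \in r -> F x <= \big[Order.max/idx]_(y <- r) F y.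
Proof.
elim: r => //= y r IH; rewrite in_cons big_cons le_max => /orP[/eqP ->|/IH ->].
  by rewrite lexx.
by rewrite orbT.
Qed.

Lemma maxdet_ge m (M : 'M[bool]_m) : bdet M <= maxdet01 m.
Proof.
exact: (le_bigmax_seq _ _ (mem_index_enum M)).
Qed.

Lemma maxdet_ge1 m : 1 <= maxdet01 m.
Proof.
have := maxdet_ge (\matrix_(i, j) (i == j) : 'M[bool]_m).
suff -> : bdet (\matrix_(i, j) (i == j) : 'M[bool]_m) = 1 by [].
rewrite /bdet -(det1 _ m); congr (\det _); apply/matrixP => i j; rewrite !mxE /b2z.
by case: (i == j).
Qed.

Lemma bdet_step q (N : 'M[bool]_q) : exists N' : 'M[bool]_q.+1, bdet N' = bdet N.
Proof.
pose N' : 'M[bool]_(1 + q) := \matrix_(i, j) (match split i, split j with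
  | inl _, inl _ => true | inr a, inr b => N a b | _, _ => false end).
exists N'; rewrite /bdet.
have -> : map_mx b2z N' = block_mx 1%:M 0 0 (map_mx b2z N).
  apply/matrixP => i j; rewrite -(splitK i) -(splitK j).
  case: (split i) => a; case: (split j) => b;
  rewrite ?block_mxEul ?block_mxEur ?block_mxEdl ?block_mxEdr !mxE !unsplitK //.
  by rewrite !ord1.
by rewrite (det_ublock (1%:M : 'M[int]_1)) det1 mul1r.
Qed.

Lemma bdet_embed p d (C : 'M[bool]_p) : exists N : 'M[bool]_(p + d), bdet N = bdet C.
Proof.
elim: d => [|d [N HN]]; first by rewrite addn0; exists C.
have [N' HN'] := bdet_step N; rewrite addnS; exists N'; by rewrite HN'.
Qed.

Lemma bdet_abs m (N : 'M[bool]_m) : `|bdet N| <= maxdet01 m.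
Proof.
have [h|h] := leP 0 (bdet N); first by rewrite ger0_norm //; exact: maxdet_ge.
rewrite ltr0_norm //.
case: m N h => [|[|m]] N h.
- by move: h; rewrite /bdet det_mx00.
- by move: h; rewrite /bdet det_mx11 mxE /b2z; case: (N 0 0).
have -> : - bdet N = bdet (xrow 0 1 N).
  rewrite /bdet map_xrow xrowE det_mulmx /tperm_mx det_perm perm.odd_tperm /=.
  by rewrite expr1 mulN1r.
exact: maxdet_ge.
Qed.

Lemma bdet_bound p m (C : 'M[bool]_p) : (p <= m)%N -> `|bdet C| <= maxdet01 m.
Proof.
move=> /subnKC <-; have [N <-] := bdet_embed (m - p) C; exact: bdet_abs.
Qed.


Section W.
Variables (R : realType) (n : nat) (S : R) (D : 'I_n -> R).
Hypothesis D0 : forall i, 0 <= D i.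

Definition cov (w : {set 'I_n} -> R) (i : 'I_n) := \sum_(A : {set 'I_n} | i \in A) w A.
Definition tot (w : {set 'I_n} -> R) := \sum_(A : {set 'I_n}) w A.
Definition good (w : {set 'I_n} -> R) :=
  (forall A, 0 <= w A) /\ (forall A, w A != 0 -> feasible S D A).

Lemma feasible_sub (A B : {set 'I_n}) : A \subset B -> feasible S D B -> feasible S D A.
Proof.
move=> sAB; rewrite /feasible; apply: le_trans.
rewrite [X in _ <= X](big_mkcond (fun j => j \in B)) [X in X <= _]big_mkcond /=.
apply: ler_sum => j _; case: ifP => jA; first by rewrite (subsetP sAB j jA).
by case: ifP.
Qed.

Lemma reidx (f : {set 'I_n} -> R) (P : pred {set 'I_n}) (i : 'I_n) :
  (forall B : {set 'I_n}, i \notin B -> P (i |: B) = P B) ->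
  \sum_(B | P B && (i \notin B)) f (i |: B) = \sum_(A | P A && (i \in A)) f A.
Proof.
move=> HP.
rewrite [RHS](reindex_onto (fun B => i |: B) (fun A => A :\ i)) /=; last first.
  by move=> A /andP[_ iA]; rewrite setD1K.
apply/esym.
apply: eq_bigl => B; rewrite setU11 andbT.
case: (boolP (i \in B)) => iB /=.
  rewrite andbF; apply/negbTE/nandP; right; apply: contraL iB => /eqP <-.
  by rewrite setD11.
by rewrite setU1K // eqxx !andbT HP.
Qed.

Definition shrink (w : {set 'I_n} -> R) (i : 'I_n) (mu : R) (B : {set 'I_n}) :=
  if i \in B then mu * w B else w B + (1 - mu) * w (i |: B).

Lemma shrink_sum (w : {set 'I_n} -> R) (i : 'I_n) (mu : R) (P : pred {set 'I_n}) :
  (forall B : {set 'I_n}, i \notin B -> P (i |: B) = P B) ->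
  \sum_(B | P B) shrink w i mu B = \sum_(B | P B) w B.
Proof.
move=> HP.
rewrite [LHS](bigID (fun B : {set 'I_n} => i \in B)) [RHS](bigID (fun B : {set 'I_n} => i \in B)) /=.
rewrite (eq_bigr (fun B => mu * w B)); last by move=> B /andP[_ iB]; rewrite /shrink iB.
have E2 : \sum_(B | P B && (i \notin B)) shrink w i mu B =
   \sum_(B | P B && (i \notin B)) (w B + (1 - mu) * w (i |: B)).
  by apply: eq_bigr => B /andP[_ iB]; rewrite /shrink (negbTE iB).
rewrite E2.
rewrite big_split /= -mulr_sumr -mulr_sumr reidx //.
set X := \sum_(B | _) w B; set Y := \sum_(B | _) w B; lra.
Qed.


Lemma shrink_step (w : {set 'I_n} -> R) (i : 'I_n) : good w -> 1 <= cov w i ->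
  exists w', [/\ good w', tot w' = tot w, cov w' i = 1 &
    forall j, j != i -> cov w' j = cov w j].
Proof.
move=> [w0 wf] c1; set c := cov w i.
have c0 : 0 < c by apply: lt_le_trans c1.
set mu := c^-1.
have mu0 : 0 < mu by rewrite invr_gt0.
have mu1 : mu <= 1 by rewrite invr_le1 // ?unitf_gt0.
exists (shrink w i mu); split.
- split=> B; rewrite /shrink; case: ifP => iB.
  + by rewrite mulr_ge0 // ltW.
  + by rewrite addr_ge0 // mulr_ge0 // subr_ge0.
  + by move=> h; apply: wf; apply: contraNneq h => ->; rewrite mulr0.
  + have [->|wB] := eqVneq (w B) 0.
      rewrite add0r => h; apply: (feasible_sub (B := i |: B)); first exact: subsetUr.
      by apply: wf; apply: contraNneq h => ->; rewrite mulr0.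
    by move=> _; apply: wf.
- by rewrite /tot (@shrink_sum _ _ _ xpredT).
- rewrite /cov (eq_bigr (fun B => mu * w B)); last by move=> B iB; rewrite /shrink iB.
  by rewrite -mulr_sumr mulVf // gt_eqF.
- move=> j ji; rewrite /cov (@shrink_sum _ _ _ (fun B => j \in B)) // => B _.
  by rewrite in_setU1 (negbTE ji).
Qed.

Lemma exact_cover (w : {set 'I_n} -> R) : good w -> (forall j, 1 <= cov w j) ->
  exists w', [/\ good w', tot w' = tot w & forall j, cov w' j = 1].
Proof.
move=> gw cw.
suff : forall l : seq 'I_n, exists w', [/\ good w', tot w' = tot w,
    forall j, 1 <= cov w' j & forall j, j \in l -> cov w' j = 1].
  case/(_ (enum 'I_n)) => w' [g t _ h]; exists w'; split=> // j.
  by apply: h; rewrite mem_enum.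
elim=> [|i l [w1 [g1 t1 c1 h1]]]; first by exists w; split.
have [w2 [g2 t2 e2 o2]] := shrink_step g1 (c1 i).
exists w2; split => //.
- by rewrite t2.
- move=> j; have [->|ji] := eqVneq j i; first by rewrite e2.
  by rewrite o2.
- move=> j; rewrite in_cons; have [->|ji] := eqVneq j i; first by rewrite e2.
  by move=> /= jl; rewrite o2 // h1.
Qed.


Definition indep (w : {set 'I_n} -> R) := forall z : {set 'I_n} -> R,
  (forall A, w A = 0 -> z A = 0) -> (forall j, cov z j = 0) -> forall A, z A = 0.

Definition supp (w : {set 'I_n} -> R) := [set A | w A != 0].

Lemma reduce_step (w : {set 'I_n} -> R) : good w -> (forall j, cov w j = 1) ->
  ~ indep w -> exists w', [/\ good w', tot w' <= tot w, forall j, cov w' j = 1 &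
     (#|supp w'| < #|supp w|)%N].
Proof.
move=> [w0 wf] cw ni.
have [z [zs zc [A0 zA0]]] : exists z : {set 'I_n} -> R,
    [/\ forall A, w A = 0 -> z A = 0, forall j, cov z j = 0 & exists A, z A != 0].
  apply: NNPP => H; apply: ni => z zs zc A; apply: NNPP => zA.
  by apply: H; exists z; split => //; exists A; apply/eqP.
pose z' := if 0 < tot z then (fun A => - z A) else z.
have z's : forall A, w A = 0 -> z' A = 0.
  by move=> A h; rewrite /z'; case: ifP => _ /=; rewrite (zs _ h) ?oppr0.
have z'c : forall j, cov z' j = 0.
  move=> j; rewrite /z'; case: ifP => _; last exact: zc.
  by rewrite /cov sumrN -/(cov z j) zc oppr0.
have z't : tot z' <= 0.
  rewrite /z'; case: ifP => h; last by rewrite leNgt h.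
  by rewrite /tot sumrN -/(tot z) oppr_le0 ltW.
have z'A0 : z' A0 != 0 by rewrite /z'; case: ifP => // _; rewrite oppr_eq0.
have [A1 zA1] : exists A1, z' A1 < 0.
  apply: NNPP => H.
  have nn : forall A, 0 <= z' A.
    by move=> A; rewrite leNgt; apply/negP => h; apply: H; exists A.
  have t0 : tot z' = 0 by apply/eqP; rewrite eq_le z't /tot sumr_ge0.
  have := @psumr_eq0P _ _ xpredT z' (fun A _ => nn A) t0 A0 isT.
  by move/eqP: z'A0.
pose F A := w A / - z' A.
case: (arg_minP F (P := fun A => z' A < 0) zA1) => As zAs minAs.
set eps := F As.
have wAs : w As != 0 by apply: contraTneq zAs => /z's ->; rewrite ltxx.
have wAs0 : 0 < w As by rewrite lt_def wAs w0.
have eps0 : 0 <= eps by rewrite /eps /F divr_ge0 // oppr_ge0 ltW.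
pose w' A := w A + eps * z' A.
have w'0 : forall A, 0 <= w' A.
  move=> A; rewrite /w'; have [h|h] := ltP (z' A) 0.
    have := minAs A h; rewrite /F ler_pdivlMr ?oppr_gt0 // mulrN.
    by rewrite -subr_ge0 opprK addrC.
  by rewrite addr_ge0 // mulr_ge0.
have w's : forall A, w A = 0 -> w' A = 0.
  by move=> A h; rewrite /w' h (z's _ h) mulr0 addr0.
exists w'; split.
- split => // A h; apply: wf; apply/eqP => h0; by move: h; rewrite (w's _ h0) eqxx.
- rewrite /tot big_split /= -mulr_sumr -/(tot w) -/(tot z') gerDl.
  by rewrite mulr_ge0_le0.
- move=> j; rewrite /cov big_split /= -mulr_sumr -/(cov w j) -/(cov z' j).
  by rewrite cw z'c mulr0 addr0.
- have sub : supp w' \subset supp w :\ As.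
    apply/subsetP => A; rewrite !inE => h; apply/andP; split.
      apply: contraNneq h => ->; rewrite /w' /eps /F.
      by apply/eqP; field; rewrite lt_eqF.
    by apply/eqP => h0; move: h; rewrite (w's _ h0) eqxx.
  rewrite (cardsD1 As (supp w)) inE wAs add1n ltnS.
  exact: subset_leq_card.
Qed.

Lemma reduce (w : {set 'I_n} -> R) : good w -> (forall j, cov w j = 1) ->
  exists w', [/\ good w', tot w' <= tot w, forall j, cov w' j = 1 & indep w'].
Proof.
have [k] : exists k, (#|supp w| <= k)%N by exists #|supp w|.
elim: k w => [|k IH] w Hk gw cw.
  exists w; split => //.
  move=> z zs _ A; apply: zs; apply/eqP; apply: contraTT Hk => h.
  by rewrite -ltnNge (cardsD1 A) inE h.
case: (classic (indep w)) => iw.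
  by exists w; split => //.
have [w1 [g1 t1 c1 s1]] := reduce_step gw cw iw.
have [w2 [g2 t2 c2 i2]] := IH w1 (leq_trans (leq_trans s1 Hk) (leqnn _)) g1 c1.
by exists w2; split => //; apply: le_trans t2 t1.
Qed.

End W.


Section C.
Variables (R : realType) (n : nat) (S : R) (D : 'I_n -> R).

Lemma sum_supp (w : {set 'I_n} -> R) (P : pred {set 'I_n}) :
  \sum_(A | P A) w A = \sum_(j < #|supp w| | P (enum_val j)) w (enum_val j).
Proof.
rewrite -(big_enum_val_cond (A := mem (supp w))) /=.
rewrite [LHS](bigID (fun A => A \in supp w)) /= [X in _ + X]big1 ?addr0.
  by apply: eq_bigl => A; rewrite andbC.
by move=> A /andP[_]; rewrite inE negbK => /eqP.
Qed.

Lemma cramer (w : {set 'I_n} -> R) : good S D w -> (forall j, cov w j = 1) -> indep w ->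
  exists k : nat, exists B, [/\ (1 <= k)%N, (k%:Z <= maxdet01 n)%R,
     is_kpacking S D k B & (size B)%:R = k%:R * tot w].
Proof.
move=> [w0 wf] cw iw.
set p := #|supp w|.
pose e (j : 'I_p) : {set 'I_n} := enum_val j.
have eF : forall j, w (e j) != 0.
  by move=> j; have := enum_valP j; rewrite inE.
pose Mt : 'M[R]_(n, p) := \matrix_(i, j) ((i \in e j)%:R).
have rfree : row_free Mt^T.
  rewrite -kermx_eq0; apply: contraT => Kn0.
  set K := kermx Mt^T.
  have [i0 [j0 Kij]] : exists i j, K i j != 0.
    apply: NNPP => H; move/negP: Kn0; apply; apply/eqP/matrixP => i j; rewrite [RHS]mxE.
    by apply: NNPP => h; apply: H; exists i, j; apply/eqP.
  have KM : K *m Mt^T = 0 by apply/eqP; rewrite -sub_kermx submx_refl.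
  pose z (A : {set 'I_n}) := \sum_(j < p | e j == A) K i0 j.
  have zs : forall A, w A = 0 -> z A = 0.
    move=> A wA; rewrite /z big_pred0 // => j; apply/negP => /eqP ejA.
    by move: (eF j); rewrite ejA wA eqxx.
  have zc : forall i, cov z i = 0.
    move=> i; rewrite /cov /z.
    have h := congr1 (fun M : 'M[R]_(p, n) => M i0 i) KM; rewrite /= !mxE in h; apply: etrans h.
    rewrite [RHS](bigID (fun j => i \in e j)) /= [X in _ + X]big1 ?addr0; last first.
      by move=> j /negbTE; rewrite !mxE => ->; rewrite mulr0.
    rewrite (partition_big e (fun A => i \in A) (P := fun j => i \in e j)) //=.
    apply: eq_bigr => A iA; apply: eq_big => [j|j /eqP ejA].
      by case: eqP => [->|_]; rewrite ?iA ?andbF.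
    by rewrite !mxE ejA iA mulr1.
  have := iw z zs zc (e j0); rewrite /z (big_pred1 j0) => [h|j].
    by move: Kij; rewrite h eqxx.
  by rewrite /e (inj_eq enum_val_inj).
have rfull : row_full Mt by rewrite /row_full -mxrank_tr.
set f := fullrankfun rfull.
have Cu : rowsub f Mt \in unitmx := fullrowsub_unit rfull.
have finj : injective f by apply: fullrankfun_inj.
have pn : (p <= n)%N by have := @leq_card _ _ (fun j : 'I_p => f j) finj; rewrite !card_ord.
pose y : 'cV[R]_p := \col_j w (e j).
have covE : forall i, \sum_j Mt i j * y j 0 = 1.
  move=> i; rewrite -(cw i) /cov sum_supp -/p [RHS]big_mkcond /=.
  by apply: eq_bigr => j _; rewrite !mxE; case: ifP; rewrite ?mul1r ?mul0r.
have totE : tot w = \sum_j y j 0.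
  by rewrite /tot sum_supp; apply: eq_bigr => j _; rewrite mxE.
have Cy : rowsub f Mt *m y = const_mx 1.
  by apply/matrixP => a b; rewrite !mxE -(covE (f a)); apply: eq_bigr => j _; rewrite !mxE.
pose Cb : 'M[bool]_p := \matrix_(a, j) (f a \in e j).
pose Ci := map_mx b2z Cb.
have CE : rowsub f Mt = map_mx intr Ci.
  by apply/matrixP => a j; rewrite !mxE /b2z; case: (f a \in e j).
set d := \det Ci.
have dE : \det (rowsub f Mt) = d%:~R by rewrite CE det_map_mx.
have d0 : d != 0.
  by move: Cu; rewrite unitmxE unitfE dE intr_eq0.
pose al j := \sum_a \adj Ci j a.
have alE : forall j, d%:~R * w (e j) = (al j)%:~R.
  move=> j; have := congr1 (fun M : 'cV[R]_p => M j 0) (congr1 (mulmx (\adj (rowsub f Mt))) Cy).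
  rewrite /= mulmxA mul_adj_mx mul_scalar_mx dE !mxE => ->.
  rewrite /al rmorph_sum /=; apply: eq_bigr => a _.
  by rewrite !mxE mulr1 CE cofactor_map_mx.
set k := `|d|%N.
pose c j := `|al j|%N.
have cE : forall j, (c j)%:R = k%:R * w (e j) :> R.
  move=> j; rewrite /c /k !natr_absz !intr_norm -(ger0_norm (w0 (e j))) -normrM.
  by rewrite alE.
exists k, (flatten [seq nseq (c j) (e j) | j <- enum 'I_p]); split.
- by rewrite absz_gt0.
- by rewrite abszE; apply: bdet_bound.
- split.
    move=> A /flattenP [s /mapP [j _ ->]]; rewrite mem_nseq => /andP[_ /eqP ->].
    exact: wf.
  move=> i; apply/eqP; rewrite -(eqr_nat R) count_flatten -map_comp sumnE big_map big_enum /=.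
  have -> : (k%:R : R) = k%:R * \sum_j Mt i j * y j 0 by rewrite covE mulr1.
  rewrite natr_sum mulr_sumr; apply/eqP; apply: eq_bigr => j _.
  rewrite /= count_nseq natrM cE !mxE mulrCA; congr (_ * _).
- rewrite size_flatten /shape -map_comp sumnE big_map big_enum /= natr_sum totE mulr_sumr.
  by apply: eq_bigr => j _; rewrite /= size_nseq cE mxE.
Qed.
End C.


Lemma ex_min (P : nat -> Prop) m : P m -> exists m0, P m0 /\ forall m', P m' -> (m0 <= m')%N.
Proof.
elim: m {-2}m (leqnn m) => [|N IH] m Hm Pm.
  exists m; split => // m' _; move: Hm; rewrite leqn0 => /eqP ->; exact: leq0n.
case: (classic (exists m', P m' /\ (m' < m)%N)) => [[m' [Pm' lt]]|H].
  apply: (IH m') => //; rewrite -ltnS; exact: leq_trans lt Hm.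
exists m; split => // m' Pm'; rewrite leqNgt; apply/negP => lt; apply: H; by exists m'.
Qed.

Lemma sum_const_count (R : realType) (T : Type) (B : seq T) (P : pred T) (c : R) :
  \sum_(A <- B | P A) c = c *+ count P B.
Proof.
elim: B => [|A B IH]; first by rewrite big_nil.
by rewrite big_cons /= IH; case: (P A); rewrite ?add0n ?mulrS.
Qed.

Section F.
Variables (R : realType) (n : nat) (S : R) (D : 'I_n -> R).
Hypotheses (hn : (0 < n)%N) (hS : 0 < S) (hD : forall i, 0 < D i <= S).

Lemma D0 i : 0 <= D i. Proof. by case/andP: (hD i) => /ltW. Qed.

Lemma opt_ex k : exists m, is_OPT S D k m.
Proof.
pose B := flatten [seq nseq k [set i] | i <- enum 'I_n].
have PB : is_kpacking S D k B.
  split.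
    move=> A /flattenP [s /mapP [j _ ->]]; rewrite mem_nseq => /andP[_ /eqP ->].
    by rewrite /feasible big_set1; case/andP: (hD j).
  move=> i; rewrite count_flatten -map_comp sumnE big_map big_enum /=.
  rewrite (bigD1 i) //= count_nseq inE eqxx mul1n big1 ?addn0 // => j ji.
  by rewrite count_nseq inE eq_sym (negbTE ji).
have [m [[B' [PB' <-]] mmin]] := ex_min (P := fun m => exists B, is_kpacking S D k B /\ size B = m)
   (ex_intro _ B (conj PB erefl)).
exists (size B'); split; first by exists B'.
by move=> B1 PB1; apply: mmin; exists B1.
Qed.

Lemma opt_uniq k m m' : is_OPT S D k m -> is_OPT S D k m' -> m = m'.
Proof.
move=> [[B [PB <-]] h] [[B' [PB' <-]] h'].
by apply/eqP; rewrite eqn_leq h // h'.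
Qed.

Lemma pack_size_pos k B : (1 <= k)%N -> is_kpacking S D k B -> (0 < size B)%N.
Proof.
move=> k1 [_ c]; have := c (Ordinal hn) => ck.
by rewrite -ck in k1; exact: leq_trans k1 (count_size _ _).
Qed.

Lemma opt_pos k m : (1 <= k)%N -> is_OPT S D k m -> (0 < m)%N.
Proof. by move=> k1 [[B [PB <-]] _]; exact: pack_size_pos PB. Qed.

Lemma pack_sched k B T : (1 <= k)%N -> 0 < T -> is_kpacking S D k B ->
  is_schedule S D T (packing_schedule T B) /\
  forall i, conn_time (packing_schedule T B) i / T = k%:R / (size B)%:R.
Proof.
move=> k1 T0 [PBf PBc]; have m0 := pack_size_pos k1 (conj PBf PBc).
have m0R : (0 : R) < (size B)%:R by rewrite ltr0n.
split; [split; [|split]|].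
- move=> p /mapP [A _ ->] /=; by rewrite divr_ge0 // ltW.
- by move=> p /mapP [A AB ->] /=; apply: PBf.
- rewrite /packing_schedule big_map sum_const_count count_predT -mulr_natr.
  field; by rewrite gt_eqF.
- move=> i; rewrite /conn_time /packing_schedule big_map /= sum_const_count PBc.
  rewrite -mulr_natr; field; rewrite ?gt_eqF //.
Qed.


Lemma best_k N : (1 <= N)%N -> exists k m, [/\ (1 <= k <= N)%N, is_OPT S D k m &
  forall k' m', (1 <= k' <= N)%N -> is_OPT S D k' m' -> k'%:R / m'%:R <= k%:R / m%:R :> R].
Proof.
elim: N => [//|N IH] _.
have [m' Hm'] := opt_ex N.+1.
case: N IH Hm' => [|N] IH Hm'.
  exists 1%N, m'; split => // k1 m1 /andP[a b] H1.
  have e : k1 = 1%N by apply/eqP; rewrite eqn_leq a b.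
  by subst k1; rewrite (opt_uniq H1 Hm').
have [k [m [/andP[k1 kN] Hm best]]] := IH isT.
have [le|lt] := leP (N.+2%:R / m'%:R : R) (k%:R / m%:R).
  exists k, m; split => //; first by rewrite k1 (leq_trans kN).
  move=> k2 m2 /andP[a b] H2; rewrite leq_eqVlt in b; case/orP: b => [/eqP e|b].
    by subst k2; rewrite (opt_uniq H2 Hm').
  by apply: best => //; rewrite a.
exists N.+2, m'; split => //.
  by rewrite leqnn.
move=> k2 m2 /andP[a b] H2; rewrite leq_eqVlt in b; case/orP: b => [/eqP e|b].
  by subst k2; rewrite (opt_uniq H2 Hm').
apply: le_trans (ltW lt); by apply: best => //; rewrite a.
Qed.

Definition Wt (s : seq (R * {set 'I_n})) (A : {set 'I_n}) := \sum_(p <- s | p.2 == A) p.1.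

Lemma Wt_sum s (P : pred {set 'I_n}) : \sum_(A | P A) Wt s A = \sum_(p <- s | P p.2) p.1.
Proof.
elim: s => [|p s IH].
  by rewrite big_nil big1 // => A _; rewrite /Wt big_nil.
rewrite big_cons -IH /Wt.
under eq_bigr => A _ do rewrite big_cons.
rewrite /=.
have -> : \sum_(A | P A) (if p.2 == A then p.1 + \sum_(j <- s | j.2 == A) j.1
                               else \sum_(j <- s | j.2 == A) j.1) =
          \sum_(A | P A) ((if p.2 == A then p.1 else 0) + \sum_(j <- s | j.2 == A) j.1).
  by apply: eq_bigr => A _; case: ifP; rewrite ?add0r.
rewrite big_split /= -big_mkcondr /=.
case: (boolP (P p.2)) => Pp.
  congr (_ + _); rewrite (eq_bigl (fun A => A == p.2)) ?big_pred1_eq // => A.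
  by rewrite eq_sym; case: eqP => [->|_]; rewrite ?Pp ?andbF.
rewrite big_pred0 ?add0r // => A; case: eqP => [<-|_]; by rewrite ?andbT ?andbF ?(negbTE Pp).
Qed.

Lemma upper k m T s : (1 <= k)%N -> is_OPT S D k m ->
  (forall k' m', (1 <= k' <= `|maxdet01 n|)%N -> is_OPT S D k' m' ->
     k'%:R / m'%:R <= k%:R / m%:R :> R) ->
  0 < T -> is_schedule S D T s -> exists i, conn_time s i / T <= k%:R / m%:R.
Proof.
move=> k1 Hm best T0 [s0 [sf sT]].
have m0 : (0 : R) < m%:R by rewrite ltr0n (opt_pos k1 Hm).
have v0 : (0 : R) <= k%:R / m%:R by rewrite divr_ge0 // ltW.
pose i0 := [arg min_(i < Ordinal hn) conn_time s i]%O.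
exists i0.
set x := conn_time s i0.
have xmin : forall j, x <= conn_time s j.
  by move=> j; rewrite /x /i0; case: arg_minP => // i _; apply.
have [x0|x0] := leP x 0.
  by apply: le_trans v0; apply: mulr_le0_ge0 => //; rewrite invr_ge0 ltW.
pose w A := Wt s A / x.
have covw : forall j, cov w j = conn_time s j / x.
  by move=> j; rewrite /cov -mulr_suml (Wt_sum s (fun A => j \in A)).
have totw : tot w = T / x.
  by rewrite /tot -mulr_suml (Wt_sum s xpredT) /= sT.
have gw : good S D w.
  split => A.
    rewrite /w divr_ge0 ?(ltW x0) // /Wt big_seq_cond sumr_ge0 // => p /andP[ps _]; exact: s0.
  apply: contraNT => nf; rewrite /w /Wt big_seq_cond big_pred0 ?mul0r // => p.
  apply/negP => /andP[ps /eqP e]; move/negP: nf; apply; rewrite -e; exact: sf.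
have cw1 : forall j, 1 <= cov w j.
  by move=> j; rewrite covw ler_pdivlMr // mul1r.
have [w1 [g1 t1 c1]] := exact_cover (fun i => D0 i) gw cw1.
have [w2 [g2 t2 c2 i2]] := reduce g1 c1.
have [k' [B [k'1 k'N PB sB]]] := cramer g2 c2 i2.
have [m' Hm'] := opt_ex k'.
have m'le : (m' <= size B)%N by case: Hm' => _; apply.
have m'0 := opt_pos k'1 Hm'.
have k'N' : (k' <= `|maxdet01 n|)%N by lia.
have le1 := best k' m' (introT andP (conj k'1 k'N')) Hm'.
apply: le_trans le1.
have sB0 : (0 : R) < (size B)%:R by rewrite ltr0n (leq_trans m'0 m'le).
have m'0R : (0 : R) < m'%:R by rewrite ltr0n.
have k'0 : (0 : R) <= k'%:R by [].
have h1 : (size B)%:R * x <= k'%:R * T.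
  have : tot w2 <= T / x by rewrite -totw -t1.
  rewrite ler_pdivlMr // => h.
  by rewrite sB -mulrA ler_wpM2l.
apply: (@le_trans _ _ (k'%:R / (size B)%:R)).
  rewrite ler_pdivrMr // mulrAC ler_pdivlMr // mulrC.
  by [].
apply: ler_wpM2l => //; by rewrite lef_pV2 ?posrE // ler_nat.
Qed.

End F.


Unset Implicit Arguments.

Theorem theorem1 (R : realType) (n : nat) (S : R) (D : 'I_n -> R)
  (hn : (0 < n)%N) (hS : 0 < S) (hD : forall i, 0 < D i <= S) :
  exists k m : nat,
    [/\ (1 <= k)%N, (k%:Z <= maxdet01 n)%R, is_OPT S D k m &
      forall T : R, 0 < T ->
        egalitarian_value S D T (k%:R / m%:R) /\
        forall B, is_kpacking S D k B -> size B = m ->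
          is_schedule S D T (packing_schedule T B) /\
          forall i, conn_time (packing_schedule T B) i / T = k%:R / m%:R].
Proof.
set N := `|maxdet01 n|%N.
have N1 : (1 <= N)%N by have := maxdet_ge1 n; rewrite /N; lia.
have [k [m [/andP[k1 kN] Hm best]]] := best_k hD N1.
exists k, m; split => //.
  by rewrite /N in kN; have := maxdet_ge1 n; lia.
move=> T T0; split.
  split.
    case: Hm => [[B [PB sB]] _]; exists (packing_schedule T B).
    have [sch c] := pack_sched hn k1 T0 PB; split => // i; by rewrite c sB.
  move=> s hs; exact: (upper hn hS hD k1 Hm best T0 hs).
move=> B PB sB; have [sch c] := pack_sched hn k1 T0 PB; split => // i; by rewrite c sB.
Qed.
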